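(* Let $(x,y)$ be a feasible solution of BLP1. Define the $m\times n$ 0-1 matrix $x^*$ by choosing, for each $i\in M$, one arbitrary $j\in N$ minimizing $c_{ij}+\sum_{k\in M,\ell\in N}q_{ijk\ell}y_{k\ell}$ and setting $x^*_{ij}=1$ for that $j$ and $x^*_{ij'}=0$ otherwise; then define the $m\times n$ 0-1 matrix $y^*$ by choosing, for each $j\in N$, one arbitrary $i\in M$ minimizing $d_{ij}+\sum_{k\in M,\ell\in N}q_{k\ell ij}x^*_{k\ell}$ and setting $y^*_{ij}=1$ for that $i$ and $y^*_{i'j}=0$ otherwise (procedure RxOy). Define RyOx symmetrically: first $y^*$ with, for each $j$, $y^*_{ij}=1$ for one $i$ minimizing $d_{ij}+\sum_{k,\ell}q_{k\ell ij}x_{k\ell}$, then $x^*$ with, for each $i$, $x^*_{ij}=1$ for one $j$ minimizing $c_{ij}+\sum_{k,\ell}q_{ijk\ell}y^*_{k\ell}$. If $(x^*,y^* )$ is obtained from $(x,y)$ by RxOy or by RyOx, then $(x^*,y^* )$ is feasible for BQAP1 and $f_1(x^*,y^* )\le f_1(x,y)$. The analogous statement holds for BLP2 and BQAP2 (with the RxOy and RyOx procedures adapted to the BQAP2 dimensions): $f_2(x^*,y^* )\le f_2(x,y)$.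
   Context: $M=\{1,\dots,m\}$, $N=\{1,\dots,n\}$. BQAP1: data $Q=(q_{ijk\ell})$ ($m\times n\times m\times n$ real array), real $m\times n$ matrices $c,d$; feasible solutions are pairs $(x,y)$ of $m\times n$ 0-1 matrices with $\sum_{j=1}^n x_{ij}=1$ for all $i\in M$ and $\sum_{i=1}^m y_{ij}=1$ for all $j\in N$; $f_1(x,y)=\sum_{i,k\in M}\sum_{j,\ell\in N} q_{ijk\ell}x_{ij}y_{k\ell}+\sum_{i\in M,j\in N}c_{ij}x_{ij}+\sum_{i\in M,j\in N}d_{ij}y_{ij}$. BLP1 is the relaxation in which the constraints $x_{ij},y_{ij}\in\{0,1\}$ are replaced by $0\le x_{ij},y_{ij}\le1$ (same equality constraints, same objective $f_1$). BQAP2: data $Q$ ($m\times m\times n\times n$ real array), real $m\times m$ matrix $c$, real $n\times n$ matrix $d$; feasible $(x,y)$: $x$ an $m\times m$ 0-1 matrix with $\sum_{j=1}^m x_{ij}=1$ for all $i\in M$, $y$ an $n\times n$ 0-1 matrix with $\sum_{i=1}^n y_{ij}=1$ for all $j\in N$; $f_2(x,y)=\sum_{i,j\in M}\sum_{k,\ell\in N} q_{ijk\ell}x_{ij}y_{k\ell}+\sum_{i,j\in M}c_{ij}x_{ij}+\sum_{i,j\in N}d_{ij}y_{ij}$; BLP2 is its relaxation with $0\le x_{ij},y_{k\ell}\le1$. For BQAP2, RxOy sets, for each $i\in M$, $x^*_{ij}=1$ for one $j\in M$ minimizing $c_{ij}+\sum_{k,\ell\in N}q_{ijk\ell}y_{k\ell}$,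 then for each $\ell\in N$, $y^*_{k\ell}=1$ for one $k\in N$ minimizing $d_{k\ell}+\sum_{i,j\in M}q_{ijk\ell}x^*_{ij}$; RyOx is symmetric. *)

(* Defs.v *)
(* Scalars in an arbitrary real field R (the paper uses the reals). *)
From HB Require Import structures.
From mathcomp Require Import all_boot all_order all_algebra.
Set Implicit Arguments. Unset Strict Implicit. Unset Printing Implicit Defensive.
Import Order.TTheory GRing.Theory Num.Theory.
Local Open Scope ring_scope.

Section Defs.
Variable R : realFieldType.

Definition row_sum1 p q (x : 'M[R]_(p, q)) := forall i, \sum_j x i j = 1.
Definition col_sum1 p q (y : 'M[R]_(p, q)) := forall j, \sum_i y i j = 1.
Definition entries01 p q (x : 'M[R]_(p, q)) := forall i j, x i j = 0 \/ x i j = 1.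
Definition entries_unit p q (x : 'M[R]_(p, q)) := forall i j, 0 <= x i j <= 1.

Definition relax_feasible p q p' q' (x : 'M[R]_(p, q)) (y : 'M[R]_(p', q')) :=
  [/\ row_sum1 x, col_sum1 y, entries_unit x & entries_unit y].
Definition int_feasible p q p' q' (x : 'M[R]_(p, q)) (y : 'M[R]_(p', q')) :=
  [/\ row_sum1 x, col_sum1 y, entries01 x & entries01 y].

Definition row_pick p q (w : 'I_p -> 'I_q -> R) (x' : 'M[R]_(p, q)) :=
  forall i, exists j, (forall j', w i j <= w i j') /\
                      (forall j', x' i j' = if j' == j then 1 else 0).
Definition col_pick p q (w : 'I_p -> 'I_q -> R) (y' : 'M[R]_(p, q)) :=
  forall j, exists i, (forall i', w i j <= w i' j) /\
                      (forall i', y' i' j = if i' == i then 1 else 0).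

Variables m n : nat.
Definition f1 (Q : 'I_m -> 'I_n -> 'I_m -> 'I_n -> R) (c d : 'M[R]_(m, n))
    (x y : 'M[R]_(m, n)) : R :=
  \sum_(i < m) \sum_(j < n) \sum_(k < m) \sum_(l < n) Q i j k l * x i j * y k l
  + \sum_(i < m) \sum_(j < n) c i j * x i j
  + \sum_(i < m) \sum_(j < n) d i j * y i j.

Definition RxOy1 (Q : 'I_m -> 'I_n -> 'I_m -> 'I_n -> R) (c d : 'M[R]_(m, n))
    (x y x' y' : 'M[R]_(m, n)) :=
  row_pick (fun i j => c i j + \sum_(k < m) \sum_(l < n) Q i j k l * y k l) x' /\
  col_pick (fun i j => d i j + \sum_(k < m) \sum_(l < n) Q k l i j * x' k l) y'.
Definition RyOx1 (Q : 'I_m -> 'I_n -> 'I_m -> 'I_n -> R) (c d : 'M[R]_(m, n))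
    (x y x' y' : 'M[R]_(m, n)) :=
  col_pick (fun i j => d i j + \sum_(k < m) \sum_(l < n) Q k l i j * x k l) y' /\
  row_pick (fun i j => c i j + \sum_(k < m) \sum_(l < n) Q i j k l * y' k l) x'.

Definition f2 (Q : 'I_m -> 'I_m -> 'I_n -> 'I_n -> R) (c : 'M[R]_m) (d : 'M[R]_n)
    (x : 'M[R]_m) (y : 'M[R]_n) : R :=
  \sum_(i < m) \sum_(j < m) \sum_(k < n) \sum_(l < n) Q i j k l * x i j * y k l
  + \sum_(i < m) \sum_(j < m) c i j * x i j
  + \sum_(i < n) \sum_(j < n) d i j * y i j.

Definition RxOy2 (Q : 'I_m -> 'I_m -> 'I_n -> 'I_n -> R) (c : 'M[R]_m) (d : 'M[R]_n)
    (x : 'M[R]_m) (y : 'M[R]_n) (x' : 'M[R]_m) (y' : 'M[R]_n) :=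
  row_pick (fun i j => c i j + \sum_(k < n) \sum_(l < n) Q i j k l * y k l) x' /\
  col_pick (fun k l => d k l + \sum_(i < m) \sum_(j < m) Q i j k l * x' i j) y'.
Definition RyOx2 (Q : 'I_m -> 'I_m -> 'I_n -> 'I_n -> R) (c : 'M[R]_m) (d : 'M[R]_n)
    (x : 'M[R]_m) (y : 'M[R]_n) (x' : 'M[R]_m) (y' : 'M[R]_n) :=
  col_pick (fun k l => d k l + \sum_(i < m) \sum_(j < m) Q i j k l * x i j) y' /\
  row_pick (fun i j => c i j + \sum_(k < n) \sum_(l < n) Q i j k l * y' k l) x'.
End Defs.

(* Main.v *)
Require Import Defs.
From HB Require Import structures.
From mathcomp Require Import all_boot all_order all_algebra.
Import Order.TTheory GRing.Theory Num.Theory.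
Set Implicit Arguments. Unset Strict Implicit.
Local Open Scope ring_scope.

Section Gen.
Variable R : realFieldType.
Variables p q p' q' : nat.
Implicit Types (x : 'M[R]_(p, q)) (y : 'M[R]_(p', q')).
Variable Q : 'I_p -> 'I_q -> 'I_p' -> 'I_q' -> R.
Variable c : 'M[R]_(p, q).
Variable d : 'M[R]_(p', q').

Definition fg x y : R :=
  \sum_(i < p) \sum_(j < q) \sum_(k < p') \sum_(l < q') Q i j k l * x i j * y k l
  + \sum_(i < p) \sum_(j < q) c i j * x i j
  + \sum_(i < p') \sum_(j < q') d i j * y i j.

Definition wx y i j := c i j + \sum_(k < p') \sum_(l < q') Q i j k l * y k l.
Definition wy x k l := d k l + \sum_(i < p) \sum_(j < q) Q i j k l * x i j.

Lemma fg_x x y : fg x y = \sum_i \sum_j wx y i j * x i j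
   + \sum_(i < p') \sum_(j < q') d i j * y i j.
Proof.
rewrite /fg /wx; congr (_ + _).
rewrite addrC -big_split /=; apply: eq_bigr => i _.
rewrite -big_split /=; apply: eq_bigr => j _.
rewrite mulrDl; congr (_ + _).
rewrite mulr_suml; apply: eq_bigr => k _.
rewrite mulr_suml; apply: eq_bigr => l _.
by rewrite mulrAC.
Qed.

Lemma swap4 (F : 'I_p -> 'I_q -> 'I_p' -> 'I_q' -> R) :
  \sum_i \sum_j \sum_k \sum_l F i j k l = \sum_k \sum_l \sum_i \sum_j F i j k l.
Proof.
under eq_bigr => i _ do rewrite exchange_big /=.
under eq_bigr => i _ do under eq_bigr => k _ do rewrite exchange_big /=.
rewrite exchange_big /=; apply: eq_bigr => k _.
by rewrite exchange_big.
Qed.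

Lemma fg_y x y : fg x y = \sum_i \sum_j c i j * x i j
   + \sum_k \sum_l wy x k l * y k l.
Proof.
rewrite /fg /wy [LHS]addrAC [RHS]addrC; congr (_ + _).
rewrite swap4 -big_split /=; apply: eq_bigr => k _.
rewrite -big_split /=; apply: eq_bigr => l _.
rewrite mulrDl addrC; congr (_ + _).
rewrite mulr_suml; apply: eq_bigr => i _.
rewrite mulr_suml; apply: eq_bigr => j _.
by [].
Qed.

Lemma sum_if a b (j0 : 'I_a) (F : 'I_a -> R) (G : 'I_b -> 'I_a -> R) i :
  (forall j, G i j = if j == j0 then 1 else 0) ->
  \sum_j F j * G i j = F j0.
Proof.
move=> H; rewrite (bigD1 j0) //= H eqxx mulr1 big1 ?addr0 // => j /negbTE ne.
by rewrite H ne mulr0.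
Qed.

Lemma row_le (w : 'I_p -> 'I_q -> R) x x' :
  row_sum1 x -> entries_unit x -> row_pick w x' ->
  \sum_i \sum_j w i j * x' i j <= \sum_i \sum_j w i j * x i j.
Proof.
move=> Hs Hu Hp; apply: ler_sum => i _.
have [j0 [Hmin Hx']] := Hp i.
rewrite (sum_if (w i) Hx').
have -> : w i j0 = \sum_j w i j0 * x i j by rewrite -mulr_sumr Hs mulr1.
apply: ler_sum => j _; apply: ler_wpM2r => //.
by have /andP[] := Hu i j.
Qed.

Lemma col_le (w : 'I_p' -> 'I_q' -> R) y y' :
  col_sum1 y -> entries_unit y -> col_pick w y' ->
  \sum_i \sum_j w i j * y' i j <= \sum_i \sum_j w i j * y i j.
Proof.
move=> Hs Hu Hp; rewrite exchange_big [X in _ <= X]exchange_big /=.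
apply: ler_sum => j _.
have [i0 [Hmin Hy']] := Hp j.
have -> : \sum_i w i j * y' i j = w i0 j.
  rewrite (bigD1 i0) //= Hy' eqxx mulr1 big1 ?addr0 // => i /negbTE ne.
  by rewrite Hy' ne mulr0.
have -> : w i0 j = \sum_i w i0 j * y i j by rewrite -mulr_sumr Hs mulr1.
apply: ler_sum => i _; apply: ler_wpM2r => //.
by have /andP[] := Hu i j.
Qed.

Lemma row_pick_feas (w : 'I_p -> 'I_q -> R) x' :
  row_pick w x' -> row_sum1 x' /\ entries01 x' /\ entries_unit x'.
Proof.
move=> Hp; split; [|split].
- move=> i; have [j0 [_ H]] := Hp i.
  by rewrite -(sum_if (fun _ => 1) H); apply: eq_bigr => j _; rewrite mul1r.
- move=> i j; have [j0 [_ H]] := Hp i; rewrite H; case: eqP; auto.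
- move=> i j; have [j0 [_ H]] := Hp i; rewrite H; case: eqP => _;
  by rewrite ?ler01 ?lexx.
Qed.

Lemma col_pick_feas (w : 'I_p' -> 'I_q' -> R) y' :
  col_pick w y' -> col_sum1 y' /\ entries01 y' /\ entries_unit y'.
Proof.
move=> Hp; split; [|split].
- move=> j; have [i0 [_ H]] := Hp j.
  rewrite (bigD1 i0) //= H eqxx big1 ?addr0 // => i /negbTE ne.
  by rewrite H ne.
- move=> i j; have [i0 [_ H]] := Hp j; rewrite H; case: eqP; auto.
- move=> i j; have [i0 [_ H]] := Hp j; rewrite H; case: eqP => _;
  by rewrite ?ler01 ?lexx.
Qed.

Lemma gen x y x' y' :
  relax_feasible x y ->
  (row_pick (wx y) x' /\ col_pick (wy x') y') \/
  (col_pick (wy x) y' /\ row_pick (wx y') x') ->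
  int_feasible x' y' /\ fg x' y' <= fg x y.
Proof.
case=> Hxs Hys Hxu Hyu [[Hr Hc]|[Hc Hr]].
- have [Hx's [Hx'01 Hx'u]] := row_pick_feas Hr.
  have [Hy's [Hy'01 Hy'u]] := col_pick_feas Hc.
  split; first by split.
  apply: (le_trans (y := fg x' y)).
    rewrite !fg_y lerD2l; exact: col_le.
  rewrite !fg_x lerD2r; exact: row_le.
- have [Hx's [Hx'01 Hx'u]] := row_pick_feas Hr.
  have [Hy's [Hy'01 Hy'u]] := col_pick_feas Hc.
  split; first by split.
  apply: (le_trans (y := fg x y')).
    rewrite !fg_x lerD2r; exact: row_le.
  rewrite !fg_y lerD2l; exact: col_le.
Qed.
End Gen.

Theorem theorem7 (R : realFieldType) (m n : nat) :
  (forall (Q : 'I_m -> 'I_n -> 'I_m -> 'I_n -> R) (c d x y x' y' : 'M[R]_(m, n)),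
     relax_feasible x y ->
     RxOy1 Q c d x y x' y' \/ RyOx1 Q c d x y x' y' ->
     int_feasible x' y' /\ f1 Q c d x' y' <= f1 Q c d x y) /\
  (forall (Q : 'I_m -> 'I_m -> 'I_n -> 'I_n -> R) (c : 'M[R]_m) (d : 'M[R]_n)
          (x x' : 'M[R]_m) (y y' : 'M[R]_n),
     relax_feasible x y ->
     RxOy2 Q c d x y x' y' \/ RyOx2 Q c d x y x' y' ->
     int_feasible x' y' /\ f2 Q c d x' y' <= f2 Q c d x y).
Proof.
split.
- move=> Q c d x y x' y' Hf H; exact: (gen (Q:=Q) (c:=c) (d:=d) Hf H).
- move=> Q c d x x' y y' Hf H; exact: (gen (Q:=Q) (c:=c) (d:=d) Hf H).
Qed.
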